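(* $\mathbf{K}^{\nabla\bullet}$ is sound and strongly complete with respect to the class of serial frames: for every set $\Gamma\cup\{\phi\}\subseteq\mathcal{L}(\nabla,\bullet)$, $\Gamma\vdash_{\mathbf{K}^{\nabla\bullet}}\phi$ iff for every Kripke model $\mathcal{M}$ with serial accessibility relation and every state $s$, if $\mathcal{M},s\vDash\Gamma$ then $\mathcal{M},s\vDash\phi$.
   Context: $\mathcal{L}(\nabla,\bullet)$: $\phi::=p\mid\neg\phi\mid\phi\land\phi\mid\nabla\phi\mid\bullet\phi$ over a nonempty set $\mathbf{P}$ of propositional variables; $\Delta\phi:=\neg\nabla\phi$, $\circ\phi:=\neg\bullet\phi$. Kripke models $\langle S,R,V\rangle$: $s\vDash\nabla\phi$ iff there are $t,u$ with $sRt$, $sRu$, $t\vDash\phi$, $u\nvDash\phi$; $s\vDash\bullet\phi$ iff $s\vDash\phi$ and there is $t$ with $sRt$, $t\nvDash\phi$. $R$ is serial if every state has an $R$-successor. The Hilbert system $\mathbf{K}^{\nabla\bullet}$ has axioms: A0 all propositional tautologies; A1 $\bullet\phi\to\phi$; A2 $\nabla\phi\leftrightarrow\nabla\neg\phi$; A3 $\bullet(\psi\to\phi)\land\phi\to\bullet\phi$; A4 $\nabla(\phi\land\psi)\to\nabla\phi\vee\nabla\psi$; A5 $\bullet(\phi\land\psi)\to\bullet\phi\vee\bullet\psi$; A6 $\nabla\phi\to\bullet\phi\vee\bullet\neg\phi$; A7 $\bullet(\phi\to\psi)\land\bullet(\neg\phi\to\chi)\to\nabla\phi$; rules R1 $\phi/\Delta\phi$;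 R2 $\phi/\circ\phi$; R3 $\phi\leftrightarrow\psi/\Delta\phi\leftrightarrow\Delta\psi$; R4 $\phi\leftrightarrow\psi/\circ\phi\leftrightarrow\circ\psi$; MP. $\Gamma\vdash\phi$ means $\vdash(\gamma_1\land\dots\land\gamma_n)\to\phi$ for some finite subset of $\Gamma$. *)

(* Defs.v *)
From Stdlib Require Import List.
Import ListNotations.
Set Implicit Arguments.

Section Logic.
Variable P : Type.

Inductive form : Type :=
| Var : P -> form
| Neg : form -> form
| And : form -> form -> form
| Nabla : form -> form
| Bullet : form -> form.

Definition Delta (a : form) : form := Neg (Nabla a).
Definition Circ (a : form) : form := Neg (Bullet a).
Definition Imp (a b : form) : form := Neg (And a (Neg b)).
Definition Or (a b : form) : form := Neg (And (Neg a) (Neg b)).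
Definition Iff (a b : form) : form := And (Imp a b) (Imp b a).

(* Propositional tautologies: formulas true under every Boolean valuation that
   treats variables and modal formulas (Nabla _, Bullet _) as atoms. *)
Fixpoint beval (v : form -> bool) (a : form) : bool :=
  match a with
  | Var _ => v a
  | Neg b => negb (beval v b)
  | And b c => andb (beval v b) (beval v c)
  | Nabla _ => v a
  | Bullet _ => v a
  end.

Definition tautology (a : form) : Prop := forall v, beval v a = true.

Inductive provable : form -> Prop :=
| A0 : forall a, tautology a -> provable a
| A1 : forall a, provable (Imp (Bullet a) a)
| A2 : forall a, provable (Iff (Nabla a) (Nabla (Neg a)))
| A3 : forall a b, provable (Imp (And (Bullet (Imp b a)) a) (Bullet a))
| A4 : forall a b, provable (Imp (Nabla (And a b)) (Or (Nabla a) (Nabla b)))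
| A5 : forall a b, provable (Imp (Bullet (And a b)) (Or (Bullet a) (Bullet b)))
| A6 : forall a, provable (Imp (Nabla a) (Or (Bullet a) (Bullet (Neg a))))
| A7 : forall a b c, provable (Imp (And (Bullet (Imp a b)) (Bullet (Imp (Neg a) c))) (Nabla a))
| R1 : forall a, provable a -> provable (Delta a)
| R2 : forall a, provable a -> provable (Circ a)
| R3 : forall a b, provable (Iff a b) -> provable (Iff (Delta a) (Delta b))
| R4 : forall a b, provable (Iff a b) -> provable (Iff (Circ a) (Circ b))
| MP : forall a b, provable (Imp a b) -> provable a -> provable b.

Definition bigAnd (g : form) (l : list form) : form := fold_left And l g.

(* Gamma |- phi : for some finite subset {g1,...,gn} of Gamma,
   |- (g1 /\ ... /\ gn) -> phi; the case n = 0 means |- phi. *)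
Definition derives (Gamma : form -> Prop) (phi : form) : Prop :=
  provable phi \/
  exists g l, Gamma g /\ (forall x, In x l -> Gamma x) /\ provable (Imp (bigAnd g l) phi).

Fixpoint sat (S : Type) (R : S -> S -> Prop) (V : P -> S -> Prop) (s : S) (a : form) : Prop :=
  match a with
  | Var p => V p s
  | Neg b => ~ sat R V s b
  | And b c => sat R V s b /\ sat R V s c
  | Nabla b => exists t u, R s t /\ R s u /\ sat R V t b /\ ~ sat R V u b
  | Bullet b => sat R V s b /\ exists t, R s t /\ ~ sat R V t b
  end.

Definition serial (S : Type) (R : S -> S -> Prop) : Prop := forall s, exists t, R s t.

End Logic.

(* Main.v *)
Require Import Defs.
From Stdlib Require Import List Classical ClassicalEpsilon.
Import ListNotations.

Fixpoint cj {P : Type} (t : form P) (l : list (form P)) : form P :=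
  match l with
  | [] => t
  | x :: l' => And x (cj t l')
  end.

Lemma beval_conj {P} (v : form P -> bool) t l :
  beval v (cj t l) = true <-> beval v t = true /\ forall x, In x l -> beval v x = true.
Proof.
  induction l as [|x l IH]; simpl.
  - split; [intros H; split; [exact H| intros _ []] | intros [H _]; exact H].
  - rewrite Bool.andb_true_iff, IH. split.
    + intros [H1 [H2 H3]]. split; auto. intros y [<-|Hy]; auto.
    + intros [H1 H2]. split; auto.
Qed.

Lemma beval_bigAnd {P} (v : form P -> bool) g l :
  beval v (bigAnd g l) = true <-> beval v g = true /\ forall x, In x l -> beval v x = true.
Proof.
  unfold bigAnd. revert g. induction l as [|x l IH]; intros g; simpl.
  - split; [intros H; split; [exact H| intros _ []] | intros [H _]; exact H].
  - rewrite IH. simpl. rewrite Bool.andb_true_iff. split.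
    + intros [[H1 H2] H3]. split; auto. intros y [<-|Hy]; auto.
    + intros [H1 H2]. auto.
Qed.

Ltac bsimp v :=
  unfold Imp, Or, Iff, Delta, Circ in *; simpl in *;
  repeat match goal with
  | |- context [beval v ?x] => destruct (beval v x)
  | H : context [beval v ?x] |- _ => destruct (beval v x)
  | |- context [v ?x] => destruct (v x)
  | H : context [v ?x] |- _ => destruct (v x)
  end; simpl in *;
  repeat match goal with H : true = true -> _ |- _ => specialize (H eq_refl) end;
  repeat match goal with H : false = false -> _ |- _ => specialize (H eq_refl) end;
  try discriminate; try reflexivity; auto.

Lemma prov_sem {P} (a b : form P) :
  provable a -> (forall v, beval v a = true -> beval v b = true) -> provable b.
Proof.
  intros Ha H. apply (@MP _ a b); [|exact Ha]. apply A0. intros v.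
  specialize (H v). unfold Imp; simpl.
  destruct (beval v a), (beval v b); simpl; auto.
Qed.

Lemma prov_taut {P} (b : form P) : (forall v, beval v b = true) -> provable b.
Proof. intros H; apply A0; exact H. Qed.

Lemma prov_sem2 {P} (a c b : form P) :
  provable a -> provable c -> (forall v, beval v a = true -> beval v c = true -> beval v b = true) -> provable b.
Proof.
  intros Ha Hc H. apply (@MP _ c b); [|exact Hc]. apply (prov_sem a); [exact Ha|].
  intros v Hv. specialize (H v Hv). unfold Imp; simpl. destruct (beval v c), (beval v b); simpl; auto.
Qed.

Lemma rep_bullet {P} (a b : form P) : provable (Iff a b) -> provable (Iff (Bullet a) (Bullet b)).
Proof.
  intros H. apply (prov_sem _ _ (R4 H)). intros v. bsimp v.
Qed.

Lemma rep_nabla {P} (a b : form P) : provable (Iff a b) -> provable (Iff (Nabla a) (Nabla b)).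
Proof.
  intros H. apply (prov_sem _ _ (R3 H)). intros v. bsimp v.
Qed.

Lemma taut_iff {P} (a b : form P) : (forall v, beval v a = beval v b) -> provable (Iff a b).
Proof. intros H. apply prov_taut. intros v. specialize (H v). bsimp v. Qed.

Definition top {P : Type} (p0 : P) : form P := Imp (Var p0) (Var p0).

Lemma prov_top {P} (p0 : P) : provable (top p0).
Proof. apply prov_taut. intros v. unfold top. bsimp v. Qed.

Definition incons {P} (p0 : P) (G : form P -> Prop) :=
  exists l, (forall x, In x l -> G x) /\ provable (Neg (cj (top p0) l)).

Definition mcs {P} (p0 : P) (D : form P -> Prop) :=
  ~ incons p0 D /\ forall a, D a \/ D (Neg a).

Lemma split_list {P} (G : form P -> Prop) b l :
  (forall x, In x l -> G x \/ x = b) ->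
  exists l2, (forall x, In x l2 -> G x) /\
    forall v, beval v b = true -> (forall x, In x l2 -> beval v x = true) ->
      forall x, In x l -> beval v x = true.
Proof.
  induction l as [|y l IH]; intros H.
  - exists []. split; [intros _ []|]. intros v _ _ x [].
  - destruct IH as [l2 [H1 H2]]. { intros x Hx. apply H. right; exact Hx. }
    destruct (H y (or_introl eq_refl)) as [Hy|Hy].
    + exists (y :: l2). split.
      * intros x [<-|Hx]; auto.
      * intros v Hb Hl x [<-|Hx].
        -- apply Hl; left; reflexivity.
        -- apply (H2 v Hb); auto. intros z Hz; apply Hl; right; exact Hz.
    + exists l2. split; auto. intros v Hb Hl x [<-|Hx].
      * subst; exact Hb.
      * apply (H2 v Hb Hl x Hx).
Qed.

Section M.
Context {P : Type} (p0 : P) (D : form P -> Prop) (HD : mcs p0 D).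

Lemma mcs_sem l b : (forall x, In x l -> D x) ->
  (forall v, (forall x, In x l -> beval v x = true) -> beval v b = true) -> D b.
Proof.
  intros Hl Hv. destruct HD as [Hc Hm]. destruct (Hm b) as [Hb|Hb]; auto.
  exfalso. apply Hc. exists (Neg b :: l). split.
  - intros x [<-|Hx]; auto.
  - apply prov_taut. intros v. specialize (Hv v). simpl.
    destruct (beval v (cj (top p0) l)) eqn:E; simpl.
    + apply beval_conj in E. destruct E as [_ E]. rewrite (Hv E). reflexivity.
    + destruct (beval v b); reflexivity.
Qed.

Lemma mcs_prov a : provable a -> D a.
Proof.
  intros H. destruct HD as [Hc Hm]. destruct (Hm a) as [Ha|Ha]; auto.
  exfalso. apply Hc. exists [Neg a]. split.
  - intros x [<-|[]]; auto.
  - apply (prov_sem _ _ H). intros v Hv. simpl. rewrite Hv. reflexivity.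
Qed.

Lemma mcs1 a b : D a -> (forall v, beval v a = true -> beval v b = true) -> D b.
Proof.
  intros Ha H. apply (mcs_sem [a]). intros x [<-|[]]; auto.
  intros v Hv. apply H, Hv. left; reflexivity.
Qed.

Lemma mcs2 a c b : D a -> D c -> (forall v, beval v a = true -> beval v c = true -> beval v b = true) -> D b.
Proof.
  intros Ha Hc H. apply (mcs_sem [a; c]). intros x [<-|[<-|[]]]; auto.
  intros v Hv. apply H; apply Hv; simpl; auto.
Qed.

Lemma mcs3 a c d b : D a -> D c -> D d ->
  (forall v, beval v a = true -> beval v c = true -> beval v d = true -> beval v b = true) -> D b.
Proof.
  intros Ha Hc Hd H. apply (mcs_sem [a; c; d]). intros x [<-|[<-|[<-|[]]]]; auto.
  intros v Hv. apply H; apply Hv; simpl; auto.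
Qed.

Lemma mcs_mp a b : provable (Imp a b) -> D a -> D b.
Proof.
  intros H Ha. apply (mcs2 _ _ _ (mcs_prov _ H) Ha). intros v. bsimp v.
Qed.

Lemma mcs_neg a : D (Neg a) <-> ~ D a.
Proof.
  split.
  - intros H1 H2. destruct HD as [Hc _]. apply Hc. exists [a; Neg a]. split.
    + intros x [<-|[<-|[]]]; auto.
    + apply prov_taut. intros v. simpl. destruct (beval v a); reflexivity.
  - intros H. destruct HD as [_ Hm]. destruct (Hm a); tauto.
Qed.

Lemma mcs_and a b : D (And a b) <-> D a /\ D b.
Proof.
  split.
  - intros H. split; apply (mcs1 _ _ H); intros v; bsimp v.
  - intros [Ha Hb]. apply (mcs2 _ _ _ Ha Hb); intros v; bsimp v.
Qed.

Lemma mcs_bullet_rep a b : provable (Iff a b) -> D (Bullet a) -> D (Bullet b).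
Proof.
  intros H Ha. apply (mcs2 _ _ _ (mcs_prov _ (rep_bullet _ _ H)) Ha). intros v. bsimp v.
Qed.

Lemma mcs_circ_rep a b : provable (Iff a b) -> D (Circ a) -> D (Circ b).
Proof.
  intros H Ha. apply (mcs2 _ _ _ (mcs_prov _ (rep_bullet _ _ H)) Ha). intros v. bsimp v.
Qed.

Lemma mcs_nabla_rep a b : provable (Iff a b) -> D (Nabla a) -> D (Nabla b).
Proof.
  intros H Ha. apply (mcs2 _ _ _ (mcs_prov _ (rep_nabla _ _ H)) Ha). intros v. bsimp v.
Qed.

Lemma mcs_delta_rep a b : provable (Iff a b) -> D (Delta a) -> D (Delta b).
Proof.
  intros H Ha. apply (mcs2 _ _ _ (mcs_prov _ (rep_nabla _ _ H)) Ha). intros v. bsimp v.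
Qed.

End M.

Section M.
Context {P : Type} (p0 : P) (D : form P -> Prop) (HD : mcs p0 D).

Ltac m1 H := apply (mcs1 p0 D HD _ _ H); intros v; bsimp v.
Ltac m2 H1 H2 := apply (mcs2 p0 D HD _ _ _ H1 H2); intros v; bsimp v.
Ltac m3 H1 H2 H3 := apply (mcs3 p0 D HD _ _ _ _ H1 H2 H3); intros v; bsimp v.
Ltac pv H := apply (prov_sem _ _ H); intros v; bsimp v.
Ltac pt := apply prov_taut; intros v; bsimp v.

Lemma bullet_t a : D (Bullet a) -> D a.
Proof. intros H. m2 (mcs_prov p0 D HD _ (A1 a)) H. Qed.

Lemma circ_f a : D (Neg a) -> D (Circ a).
Proof. intros H. m2 (mcs_prov p0 D HD _ (A1 a)) H. Qed.

Lemma circ_mono a b : provable (Imp a b) -> D a -> D (Circ a) -> D (Circ b).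
Proof.
  intros H Ha Hc.
  assert (D (Circ (Imp (Neg b) a))) as H1.
  { m3 (mcs_prov p0 D HD _ (A3 a (Neg b))) Ha Hc. }
  apply (mcs_circ_rep p0 D HD (Imp (Neg b) a) b); [pv H|exact H1].
Qed.

Lemma circ_and a b : D (Circ a) -> D (Circ b) -> D (Circ (And a b)).
Proof. intros H1 H2. m3 (mcs_prov p0 D HD _ (A5 a b)) H1 H2. Qed.

Lemma key_or X c : D (Delta X) -> D (Bullet (Neg X)) -> D (Circ (Or X c)).
Proof.
  intros H1 H2.
  assert (D (Bullet (Imp X (Neg X)))) as H3.
  { apply (mcs_bullet_rep p0 D HD (Neg X)); [pt|exact H2]. }
  assert (D (Circ (Imp (Neg X) c))) as H4.
  { m3 (mcs_prov p0 D HD _ (A7 X (Neg X) c)) H3 H1. }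
  apply (mcs_circ_rep p0 D HD (Imp (Neg X) c)); [pt|exact H4].
Qed.

Lemma delta_circ a : D (Circ a) -> D (Circ (Neg a)) -> D (Delta a).
Proof. intros H1 H2. m3 (mcs_prov p0 D HD _ (A6 a)) H1 H2. Qed.

Lemma delta_and a b : D (Delta a) -> D (Delta b) -> D (Delta (And a b)).
Proof. intros H1 H2. m3 (mcs_prov p0 D HD _ (A4 a b)) H1 H2. Qed.

Lemma delta_neg a : D (Delta a) -> D (Delta (Neg a)).
Proof. intros H1. m2 (mcs_prov p0 D HD _ (A2 a)) H1. Qed.

Lemma delta_neg' a : D (Delta (Neg a)) -> D (Delta a).
Proof. intros H1. m2 (mcs_prov p0 D HD _ (A2 a)) H1. Qed.

Lemma nabla_neg a : D (Nabla a) -> D (Nabla (Neg a)).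
Proof. intros H1. m2 (mcs_prov p0 D HD _ (A2 a)) H1. Qed.

Lemma delta_or a b : D (Delta a) -> D (Delta b) -> D (Delta (Or a b)).
Proof.
  intros H1 H2. apply delta_neg. apply delta_and; apply delta_neg; assumption.
Qed.

Lemma bullet_down phi X : provable (Imp phi X) -> D (Bullet X) -> D phi -> D (Bullet phi).
Proof.
  intros H H1 H2.
  assert (D (Bullet (Imp (Neg X) phi))) as H3.
  { apply (mcs_bullet_rep p0 D HD X); [pv H|exact H1]. }
  m3 (mcs_prov p0 D HD _ (A3 phi (Neg X))) H3 H2.
Qed.

Lemma nabla_split a : D (Nabla a) -> D (Bullet a) \/ D (Bullet (Neg a)).
Proof.
  intros H. destruct (classic (D (Bullet a))) as [Hb|Hb]; [left; exact Hb|right].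
  apply (mcs_neg p0 D HD) in Hb. m3 (mcs_prov p0 D HD _ (A6 a)) H Hb.
Qed.

Definition Bx X := (D X /\ D (Circ X)) \/ (D (Neg X) /\ D (Delta X) /\ D (Bullet (Neg X))).

Lemma B_prov X : provable X -> Bx X.
Proof. intros H. left. split; apply (mcs_prov p0 D HD); [exact H| exact (R2 H)]. Qed.

Lemma B_mono X Y : provable (Imp X Y) -> Bx X -> Bx Y.
Proof.
  intros H [[H1 H2]|[H1 [H2 H3]]].
  - left. split; [apply (mcs_mp p0 D HD _ _ H H1)|apply (circ_mono _ _ H H1 H2)].
  - destruct (classic (D Y)) as [HY|HY].
    + left. split; [exact HY|].
      apply (mcs_circ_rep p0 D HD (Or X Y)); [pv H|]. apply key_or; assumption.
    + apply (mcs_neg p0 D HD) in HY. right. split; [exact HY|]. split.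
      * apply (mcs_delta_rep p0 D HD (Or X (And Y (Neg X)))); [pv H|].
        apply delta_or; [exact H2|]. apply delta_circ.
        -- apply circ_f. m1 HY.
        -- apply (mcs_circ_rep p0 D HD (Or X (Neg Y))); [pt|]. apply key_or; assumption.
      * apply (bullet_down _ (Neg X)); [pv H|exact H3|exact HY].
Qed.

Lemma B_and12 X Y : D X -> D (Circ X) -> D (Neg Y) -> D (Delta Y) -> D (Bullet (Neg Y)) ->
  Bx (And X Y).
Proof.
  intros H1 H2 H3 H4 H5. right. split; [m1 H3|]. split.
  - apply delta_and; [|exact H4]. apply delta_circ; [exact H2|]. apply circ_f. m1 H1.
  - destruct (classic (D (Bullet (Neg (And X Y))))) as [Hb|Hb]; [exact Hb|].
    apply (mcs_neg p0 D HD) in Hb. exfalso.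
    assert (D (Circ (And X (Neg (And X Y))))) as H6 by (apply circ_and; assumption).
    assert (D (Neg (And X Y))) as H7 by m1 H3.
    assert (D (Circ (Neg Y))) as H8.
    { apply (circ_mono (And X (Neg (And X Y)))); [pt| apply (mcs_and p0 D HD); split; assumption | exact H6]. }
    apply (mcs_neg p0 D HD) in H8. exact (H8 H5).
Qed.

Lemma B_and X Y : Bx X -> Bx Y -> Bx (And X Y).
Proof.
  intros [[H1 H2]|[H1 [H2 H3]]] [[K1 K2]|[K1 [K2 K3]]].
  - left. split; [apply (mcs_and p0 D HD); split; assumption| apply circ_and; assumption].
  - apply B_and12; assumption.
  - apply (B_mono (And Y X)); [pt|]. apply B_and12; assumption.
  - right. split; [m1 H1|]. split; [apply delta_and; assumption|].
    destruct (classic (D (Bullet (Neg (And X Y))))) as [Hb|Hb]; [exact Hb|].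
    apply (mcs_neg p0 D HD) in Hb. exfalso.
    assert (D (Circ (Or X (Neg Y)))) as H4 by (apply key_or; assumption).
    assert (D (Circ (Neg Y))) as H5.
    { apply (mcs_circ_rep p0 D HD (And (Neg (And X Y)) (Or X (Neg Y)))); [pt|].
      apply circ_and; assumption. }
    apply (mcs_neg p0 D HD) in H5. exact (H5 K3).
Qed.

Lemma B_conj l : (forall x, In x l -> Bx x) -> Bx (cj (top p0) l).
Proof.
  induction l as [|x l IH]; intros H; simpl.
  - apply B_prov, prov_top.
  - apply B_and; [apply H; left; reflexivity| apply IH; intros y Hy; apply H; right; exact Hy].
Qed.

Lemma box_incons psi : incons p0 (fun x => Bx x \/ x = psi) -> Bx (Neg psi).
Proof.
  intros [l [Hl Hp]].
  destruct (split_list Bx psi l Hl) as [l2 [H1 H2]].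
  apply (B_mono (cj (top p0) l2)); [|apply B_conj; exact H1].
  apply (prov_sem _ _ Hp). intros v Hv.
  destruct (beval v psi) eqn:Ep; destruct (beval v (cj (top p0) l2)) eqn:Ec;
    unfold Imp; simpl; rewrite ?Ep, ?Ec; simpl; auto.
  exfalso. apply beval_conj in Ec. destruct Ec as [Et Ec].
  specialize (H2 v Ep Ec).
  assert (beval v (cj (top p0) l) = true) as E.
  { apply beval_conj. split; assumption. }
  simpl in Hv. rewrite E in Hv. discriminate.
Qed.

End M.

Section S.
Context {P : Type} {S : Type} (R : S -> S -> Prop) (V : P -> S -> Prop).

Definition cv (s : S) (x : form P) : bool :=
  if excluded_middle_informative (sat R V s x) then true else false.

Lemma cv_beval s a : beval (cv s) a = true <-> sat R V s a.
Proof.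
  induction a; simpl.
  all: try (unfold cv; destruct excluded_middle_informative; simpl; split; intros; auto; try discriminate; contradiction).
  - rewrite Bool.negb_true_iff, <- IHa. destruct (beval (cv s) a); split; intros; auto; try discriminate; congruence.
  - rewrite Bool.andb_true_iff, IHa1, IHa2. tauto.
Qed.

Lemma sound_gen (a : form P) : provable a -> forall s, sat R V s a.
Proof.
  induction 1; intros s; unfold Imp, Or, Iff, Delta, Circ in *; simpl in *.
  all: try (apply NNPP; intros HH; firstorder fail).
  - apply cv_beval. apply H.
  - intros [[t [u [Rt [Ru [[Ha Hb] Hn]]]]] Hnn]. apply Hnn. intros [H1 H2].
    destruct (classic (sat R V u a)) as [Hua|Hua].
    + apply H2. exists t, u. repeat split; auto.
    + apply H1. exists t, u. repeat split; auto.
  - assert (E : forall x, sat R V x a <-> sat R V x b).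
    { intros x. destruct (IHprovable x) as [K1 K2]. split; intros K; apply NNPP; intros K3; firstorder. }
    split; intros [K1 K2]; apply K2; intros [t [u [Rt [Ru [Ht Hu]]]]]; apply K1;
      exists t, u; (split; [exact Rt|split; [exact Ru|split]]);
      first [exact (proj1 (E t) Ht) | exact (proj2 (E t) Ht)
            | intros Hu'; apply Hu; first [exact (proj1 (E u) Hu') | exact (proj2 (E u) Hu')]].
Qed.
End S.

Lemma sat_bigAnd {P S} (R : S -> S -> Prop) (V : P -> S -> Prop) s g l :
  sat R V s (bigAnd g l) <-> sat R V s g /\ forall x, In x l -> sat R V s x.
Proof.
  rewrite <- cv_beval, beval_bigAnd, cv_beval. split.
  - intros [H1 H2]. split; auto. intros x Hx. apply cv_beval. auto.
  - intros [H1 H2]. split; auto. intros x Hx. apply cv_beval. auto.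
Qed.

From mathcomp Require Import ssreflect ssrfun ssrbool boolp classical_sets.
Local Open Scope classical_set_scope.

Lemma zorn_sets (T : Type) (P : (T -> Prop) -> Prop) :
  (forall F : (T -> Prop) -> Prop, (forall X, F X -> P X) ->
     (forall X Y, F X -> F Y -> (forall x, X x -> Y x) \/ (forall x, Y x -> X x)) ->
     P (fun x => exists X, F X /\ X x)) ->
  exists A, P A /\ forall B, (forall x, A x -> B x) -> (exists x, B x /\ ~ A x) -> ~ P B.
Proof.
move=> H.
have Hz := @Zorn_bigcup T P.
have [A [PA Amax]] : exists A, P A /\ forall B, A `<` B -> ~ P B.
  apply: Hz => F FP Ftot.
  have -> : (\bigcup_(X in F) X) = (fun x => exists X, F X /\ X x).
    apply/funext => x; apply/propext; split.
    - by case=> X FX Xx; exists X.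
    - by case=> X [FX Xx]; exists X.
  apply: H; first exact: FP.
  move=> X Y FX FY; case: (Ftot X Y FX FY) => h; [left|right] => x; exact: h.
exists A; split => // B AB [x [Bx nAx]].
apply: Amax; split; first by move=> y; exact: AB.
by move=> E; apply: nAx; apply: E.
Qed.

Lemma incons_mono {P} (p0 : P) (G1 G2 : form P -> Prop) :
  (forall x, G1 x -> G2 x) -> incons p0 G1 -> incons p0 G2.
Proof. intros H [l [Hl Hp]]. exists l. split; auto. Qed.

Lemma top_true {P} (p0 : P) v : beval v (top p0) = true.
Proof. unfold top, Imp. simpl. destruct (v (Var p0)); reflexivity. Qed.

Lemma chain_list {P} (G : form P -> Prop) (F : (form P -> Prop) -> Prop) :
  (forall X Y, F X -> F Y -> (forall x, X x -> Y x) \/ (forall x, Y x -> X x)) ->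
  forall l, (forall x, In x l -> G x \/ exists X, F X /\ X x) ->
  (forall x, In x l -> G x) \/ exists X, F X /\ forall x, In x l -> G x \/ X x.
Proof.
  intros Hch l. induction l as [|y l IH]; intros Hl.
  - left. intros _ [].
  - destruct IH as [IH|[X [FX IH]]]. { intros x Hx. apply Hl. right. exact Hx. }
    + destruct (Hl y (or_introl eq_refl)) as [Gy|[Y [FY Yy]]].
      * left. intros x [<-|Hx]; auto.
      * right. exists Y. split; auto. intros x [<-|Hx]; auto.
    + destruct (Hl y (or_introl eq_refl)) as [Gy|[Y [FY Yy]]].
      * right. exists X. split; auto. intros x [<-|Hx]; auto.
      * destruct (Hch X Y FX FY) as [XY|YX].
        -- right. exists Y. split; auto. intros x [<-|Hx]; auto.
           destruct (IH x Hx); auto.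
        -- right. exists X. split; auto. intros x [<-|Hx]; auto.
Qed.

Lemma lindenbaum {P} (p0 : P) (G : form P -> Prop) :
  ~ incons p0 G -> exists D, mcs p0 D /\ forall x, G x -> D x.
Proof.
  intros HG.
  destruct (zorn_sets (form P) (fun X => ~ incons p0 (fun x => G x \/ X x))) as [A [PA Amax]].
  { intros F HF Hch [l [Hl Hp]].
    destruct (chain_list G F Hch l Hl) as [K|[X [FX K]]].
    - apply HG. exists l. split; auto.
    - apply (HF X FX). exists l. split; auto. }
  exists (fun x => G x \/ A x). split; [split|].
  - exact PA.
  - intros a. apply NNPP. intros Hn.
    assert (Hna : ~ (G a \/ A a)) by tauto.
    assert (Hnna : ~ (G (Neg a) \/ A (Neg a))) by tauto.
    assert (I1 : incons p0 (fun x => (G x \/ A x) \/ x = a)).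
    { apply NNPP. intros Hc. apply (Amax (fun x => A x \/ x = a)).
      - intros x Hx; left; exact Hx.
      - exists a. split; auto.
      - intros Hi. apply Hc. revert Hi. apply incons_mono. intros x; tauto. }
    assert (I2 : incons p0 (fun x => (G x \/ A x) \/ x = Neg a)).
    { apply NNPP. intros Hc. apply (Amax (fun x => A x \/ x = Neg a)).
      - intros x Hx; left; exact Hx.
      - exists (Neg a). split; auto.
      - intros Hi. apply Hc. revert Hi. apply incons_mono. intros x; tauto. }
    destruct I1 as [l1 [H1 P1]]. destruct I2 as [l2 [H2 P2]].
    destruct (split_list _ a l1 H1) as [m1 [M1 S1]].
    destruct (split_list _ (Neg a) l2 H2) as [m2 [M2 S2]].
    apply PA. exists (m1 ++ m2). split.
    + intros x Hx. apply in_app_iff in Hx. destruct Hx; auto.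
    + apply (prov_sem2 _ _ _ P1 P2). intros v V1 V2. simpl in *.
      apply Bool.negb_true_iff in V1. apply Bool.negb_true_iff in V2.
      apply Bool.negb_true_iff. destruct (beval v (cj (top p0) (m1 ++ m2))) eqn:Ec; auto.
      apply beval_conj in Ec. destruct Ec as [Et Ec].
      destruct (beval v a) eqn:Ea.
      * assert (beval v (cj (top p0) l1) = true) as E1.
        { apply beval_conj. split; auto. apply (S1 v Ea). intros x Hx. apply Ec. apply in_app_iff; auto. }
        congruence.
      * assert (beval v (cj (top p0) l2) = true) as E2.
        { apply beval_conj. split; auto. apply (S2 v). simpl; rewrite Ea; reflexivity.
          intros x Hx. apply Ec. apply in_app_iff; auto. }
        congruence.
  - intros x Hx; left; exact Hx.
Qed.

Section Can.
Context {P : Type} (p0 : P).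

Ltac pt := apply prov_taut; intros v; bsimp v.
Ltac m1 HD H := apply (mcs1 p0 _ HD _ _ H); intros v; bsimp v.

Definition Can := {D : form P -> Prop | mcs p0 D}.
Definition Rc (s t : Can) : Prop := forall X, Bx (proj1_sig s) X -> proj1_sig t X.
Definition Vc (p : P) (s : Can) : Prop := proj1_sig s (Var p).

Lemma succ_ex (s : Can) psi : ~ Bx (proj1_sig s) (Neg psi) -> exists t, Rc s t /\ proj1_sig t psi.
Proof.
  intros H. destruct (lindenbaum p0 (fun x => Bx (proj1_sig s) x \/ x = psi)) as [D [HD HG]].
  { intros Hi. apply H. apply (box_incons p0 _ (proj2_sig s)). exact Hi. }
  exists (exist _ D HD). split.
  - intros X HX. apply HG. left; exact HX.
  - apply HG. right; reflexivity.
Qed.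

Lemma truth a : forall s : Can, sat Rc Vc s a <-> proj1_sig s a.
Proof.
  induction a as [p|a IH|a IHa b IHb|a IH|a IH]; intros [D HD]; simpl.
  - unfold Vc; simpl; tauto.
  - rewrite (IH (exist _ D HD)). simpl. rewrite (mcs_neg p0 D HD). tauto.
  - rewrite (IHa (exist _ D HD)). rewrite (IHb (exist _ D HD)). simpl. rewrite (mcs_and p0 D HD). tauto.
  - split.
    + intros [t [u [Rt [Ru [Ht Hu]]]]]. rewrite IH in Ht. rewrite IH in Hu.
      apply NNPP. intros Hn. apply (mcs_neg p0 D HD) in Hn. fold (Delta a) in Hn.
      destruct (proj2 HD a) as [Ha|Ha].
      * destruct (Classical_Prop.classic (D (Bullet a))) as [Hb|Hb].
        -- assert (Bx D (Neg a)) as HB.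
           { right. split; [m1 HD Ha|]. split.
             - apply (delta_neg p0 D HD). exact Hn.
             - apply (mcs_bullet_rep p0 D HD a); [pt|exact Hb]. }
           pose proof (Rt _ HB) as K. simpl in K. apply (mcs_neg p0 _ (proj2_sig t)) in K. exact (K Ht).
        -- apply (mcs_neg p0 D HD) in Hb.
           exact (Hu (Ru a (or_introl (conj Ha Hb)))).
      * destruct (Classical_Prop.classic (D (Bullet (Neg a)))) as [Hb|Hb].
        -- exact (Hu (Ru a (or_intror (conj Ha (conj Hn Hb))))).
        -- apply (mcs_neg p0 D HD) in Hb.
           pose proof (Rt _ (or_introl (conj Ha Hb))) as K.
           apply (mcs_neg p0 _ (proj2_sig t)) in K. exact (K Ht).
    + intros HN.
      destruct (succ_ex (exist _ D HD) a) as [t [Rt Ht]].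
      { simpl. intros [[H1 H2]|[H1 [H2 H3]]].
        - destruct (nabla_split p0 D HD (Neg a) (nabla_neg p0 D HD a HN)) as [K|K].
          + apply (mcs_neg p0 D HD) in H2. exact (H2 K).
          + apply (bullet_t p0 D HD) in K. apply (mcs_neg p0 D HD) in K. exact (K H1).
        - apply (mcs_neg p0 D HD) in H2. apply H2. apply (nabla_neg p0 D HD). exact HN. }
      destruct (succ_ex (exist _ D HD) (Neg a)) as [u [Ru Hu]].
      { simpl. intros HB. apply (B_mono p0 D HD _ a) in HB; [|pt].
        destruct HB as [[H1 H2]|[H1 [H2 H3]]].
        - destruct (nabla_split p0 D HD a HN) as [K|K].
          + apply (mcs_neg p0 D HD) in H2. exact (H2 K).
          + apply (bullet_t p0 D HD) in K. apply (mcs_neg p0 D HD) in K. exact (K H1).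
        - apply (mcs_neg p0 D HD) in H2. exact (H2 HN). }
      exists t, u. split; [exact Rt|]. split; [exact Ru|]. split.
      * apply IH. exact Ht.
      * rewrite IH. apply (mcs_neg p0 _ (proj2_sig u)). exact Hu.
  - split.
    + intros [Ha [t [Rt Ht]]]. rewrite (IH (exist _ D HD)) in Ha. simpl in Ha. rewrite IH in Ht.
      apply NNPP. intros Hb. apply (mcs_neg p0 D HD) in Hb.
      exact (Ht (Rt a (or_introl (conj Ha Hb)))).
    + intros HB. pose proof (bullet_t p0 D HD a HB) as Ha. split.
      * rewrite (IH (exist _ D HD)). exact Ha.
      * destruct (succ_ex (exist _ D HD) (Neg a)) as [t [Rt Ht]].
        { simpl. intros HB2. apply (B_mono p0 D HD _ a) in HB2; [|pt].
          destruct HB2 as [[H1 H2]|[H1 [H2 H3]]].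
          - apply (mcs_neg p0 D HD) in H2. exact (H2 HB).
          - apply (mcs_neg p0 D HD) in H1. exact (H1 Ha). }
        exists t. split; [exact Rt|]. rewrite IH. apply (mcs_neg p0 _ (proj2_sig t)). exact Ht.
Qed.

Lemma can_serial : serial Rc.
Proof.
  intros [D HD]. destruct (succ_ex (exist _ D HD) (top p0)) as [t [Rt _]].
  - simpl. intros [[H1 H2]|[H1 [H2 H3]]].
    + apply (mcs_neg p0 D HD) in H1. apply H1. apply (mcs_prov p0 D HD). apply prov_top.
    + apply (mcs_neg p0 D HD) in H3. apply H3. apply (mcs_prov p0 D HD).
      apply R2. apply (prov_sem _ _ (prov_top p0)). intros v. bsimp v.
  - exists t. exact Rt.
Qed.
End Can.

Theorem theorem2 (P : Type) (p0 : P) (Gamma : form P -> Prop) (phi : form P) :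
  derives Gamma phi <->
  (forall (S : Type) (R : S -> S -> Prop) (V : P -> S -> Prop),
      serial R ->
      forall s : S, (forall g, Gamma g -> sat R V s g) -> sat R V s phi).
Proof.
  split.
  - intros [Hp | [g [l [Hg [Hl Hp]]]]] S R V Hser s HG.
    + exact (sound_gen R V phi Hp s).
    + pose proof (sound_gen R V _ Hp s) as K. unfold Imp in K. simpl in K.
      apply NNPP. intros Hn. apply K. split; auto.
      apply sat_bigAnd. split; auto.
  - intros Hsem. apply NNPP. intros Hnd.
    assert (Hc : ~ incons p0 (fun x => Gamma x \/ x = Neg phi)).
    { intros [l [Hl Hp]].
      destruct (split_list Gamma (Neg phi) l Hl) as [m [M Sm]].
      apply Hnd. destruct m as [|g m'].
      - left. apply (prov_sem _ _ Hp). intros v Hv.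
        destruct (beval v phi) eqn:E; auto. exfalso.
        assert (beval v (cj (top p0) l) = true) as E2.
        { apply beval_conj. split; [apply top_true|]. apply Sm. simpl; rewrite E; reflexivity.
          intros x []. }
        simpl in Hv. rewrite E2 in Hv. discriminate.
      - right. exists g, m'. split; [apply M; left; reflexivity|].
        split; [intros x Hx; apply M; right; exact Hx|].
        apply (prov_sem _ _ Hp). intros v Hv. unfold Imp. simpl.
        destruct (beval v (bigAnd g m')) eqn:E1; destruct (beval v phi) eqn:E; simpl; auto.
        exfalso. apply beval_bigAnd in E1. destruct E1 as [E1 E3].
        assert (beval v (cj (top p0) l) = true) as E2.
        { apply beval_conj. split; [apply top_true|]. apply Sm. simpl; rewrite E; reflexivity.
          intros x [<-|Hx]; auto. }
        simpl in Hv. rewrite E2 in Hv. discriminate. }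
    destruct (lindenbaum p0 _ Hc) as [D [HD HG]].
    pose proof (Hsem (Can p0) (Rc p0) (Vc p0) (can_serial p0) (exist _ D HD)) as K.
    assert (Dphi : D phi).
    { apply (truth p0 phi (exist _ D HD)). apply K. intros g Hg.
      apply (truth p0 g (exist _ D HD)). simpl. apply HG. left; exact Hg. }
    assert (Dn : D (Neg phi)) by (apply HG; right; reflexivity).
    apply (mcs_neg p0 D HD) in Dn. exact (Dn Dphi).
Qed.
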